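(* Let $(X,V)$ and $(\overline{X},\overline{V})$ be solutions of the discrete Motsch–Tadmor model (as in the context) whose initial data satisfy \[ \max\{\|\Delta^x(0)\|_F,\|\Delta^{\overline{x}}(0)\|_F\}<M,\quad \|\Delta^v(0)\|_F<\kappa\int_{\|\Delta^x(0)\|_F}^M\psi(s)\,ds,\quad \|\Delta^{\overline{v}}(0)\|_F<\kappa\int_{\|\Delta^{\overline{x}}(0)\|_F}^M\psi(s)\,ds, \] and let $C\in(0,1)$. Then there are constants $\bar c_0,\bar c_1,\bar c_2\ge0$ depending on $V(0)$, $\overline{V}(0)$ and the model parameters such that, for $h>0$ sufficiently small and any $0<\epsilon<1$, with $b_1=(\bar c_0\epsilon+\bar c_1h+\bar c_2h^2)^{1/2}$ and $b_2=C\kappa\psi(M)h$, for all $n\ge0$ \[ \|\Delta^v(n)-\Delta^{\overline{v}}(n)\|_F\le(1-\epsilon)^n\|\Delta^v(0)-\Delta^{\overline{v}}(0)\|_F+\frac{b_1e^{b_2}}{1-(1-\epsilon)e^{b_2}}e^{-b_2n}. \]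
   Context: Discrete MT model: fix $N\ge1$, $d\ge1$, $\kappa>0$, $h>0$, and $a:[0,\infty)\to\mathbb{R}$ with constants $0<c_1\le c_2$, $c_1\le a\le c_2$, $|a(r_1)-a(r_2)|\le L_a|r_1-r_2|$ ($L_a>0$); $0<h<\min\{1,1/\kappa\}$. A solution satisfies $x_i(n+1)=x_i(n)+hv_i(n)$, $v_i(n+1)=v_i(n)+h\kappa\sum_j\phi_{ij}(n)(v_j(n)-v_i(n))$ with $\phi_{ij}(n)=\frac{a(\|x_i(n)-x_j(n)\|)}{\sum_ka(\|x_i(n)-x_k(n)\|)}$, $x_i,v_i\in\mathbb{R}^d$. Notation: $\Delta^x_{ij}=x_i-x_j$, $\Delta^v_{ij}=v_i-v_j$, similarly $\Delta^{\overline{x}},\Delta^{\overline{v}}$; $\|A\|_F=(\sum_{i,j}\|A_{ij}\|^2)^{1/2}$. Constants: $\|\phi\|_{\mathrm{Lip}}=\frac{L_a}{Nc_1}(1+\frac{c_2}{c_1})$, $M=\frac{1}{4N\|\phi\|_{\mathrm{Lip}}}$, $\psi(s)=1-\|\phi\|_{\mathrm{Lip}}Ns$. *)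

(* Defs.v *)
From HB Require Import structures.
From mathcomp Require Import all_boot all_order all_algebra.
From mathcomp Require Import all_classical all_reals all_analysis.
Set Implicit Arguments. Unset Strict Implicit. Unset Printing Implicit Defensive.
Import Order.TTheory GRing.Theory Num.Theory.
Import numFieldNormedType.Exports.
Local Open Scope classical_set_scope.
Local Open Scope ring_scope.

Section MT.
Variable R : realType.

Definition enorm (d : nat) (u : 'rV[R]_d) : R :=
  Num.sqrt (\sum_(k < d) (u 0 k) ^+ 2).

Definition frobDelta (N d : nat) (y : 'I_N -> 'rV[R]_d) : R :=
  Num.sqrt (\sum_(i < N) \sum_(j < N) enorm (y i - y j) ^+ 2).

Definition frobDeltaDiff (N d : nat) (y yb : 'I_N -> 'rV[R]_d) : R :=
  Num.sqrt (\sum_(i < N) \sum_(j < N)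
              enorm ((y i - y j) - (yb i - yb j)) ^+ 2).

Definition mt_phi (N d : nat) (a : R -> R) (x : 'I_N -> 'rV[R]_d) (i j : 'I_N) : R :=
  a (enorm (x i - x j)) / \sum_(k < N) a (enorm (x i - x k)).

Definition is_MT_solution (N d : nat) (kappa h : R) (a : R -> R)
    (x v : nat -> 'I_N -> 'rV[R]_d) : Prop :=
  forall (n : nat) (i : 'I_N),
    x n.+1 i = x n i + h *: v n i /\
    v n.+1 i = v n i + (h * kappa) *: \sum_(j < N) mt_phi a (x n) i j *: (v n j - v n i).

Definition phiLip (N : nat) (c1 c2 La : R) : R :=
  La / (N%:R * c1) * (1 + c2 / c1).

Definition Mconst (N : nat) (c1 c2 La : R) : R :=
  1 / (4 * N%:R * phiLip N c1 c2 La).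

Definition psi (N : nat) (c1 c2 La : R) (s : R) : R :=
  1 - phiLip N c1 c2 La * N%:R * s.

Definition psi_int (N : nat) (c1 c2 La r M : R) : R :=
  \int[lebesgue_measure]_(s in `[r, M]) psi N c1 c2 La s.

End MT.

(* Main.v *)
Require Import Defs.
From HB Require Import structures.
From mathcomp Require Import all_boot all_order all_algebra.
From mathcomp Require Import all_classical all_reals all_analysis.
From mathcomp Require Import ring lra.
Import Order.TTheory GRing.Theory Num.Theory.
Import numFieldNormedType.Exports.
Local Open Scope classical_set_scope.
Local Open Scope ring_scope.


Module Helpers.
Set Implicit Arguments. Unset Strict Implicit.



Section Norm.
Variable R : realType.
Variable d : nat.
Implicit Types u w : 'rV[R]_d.

Lemma cs_sum (a b : 'I_d -> R) :
  (\sum_k a k * b k) ^+ 2 <= (\sum_k a k ^+ 2) * (\sum_k b k ^+ 2).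
Proof.
have H : 0 <= \sum_k \sum_l (a k * b l - a l * b k) ^+ 2.
  by apply: sumr_ge0 => k _; apply: sumr_ge0 => l _; exact: sqr_ge0.
have E : \sum_k \sum_l (a k * b l - a l * b k) ^+ 2 =
   \sum_k \sum_l (a k ^+ 2 * b l ^+ 2) + \sum_k \sum_l (a l ^+ 2 * b k ^+ 2)
   - 2 * \sum_k \sum_l ((a k * b k) * (a l * b l)).
  rewrite mulr_sumr -big_split -sumrB /=; apply: eq_bigr => k _.
  rewrite mulr_sumr -big_split -sumrB /=; apply: eq_bigr => l _; ring.
have E1 : \sum_k \sum_l (a k ^+ 2 * b l ^+ 2) = (\sum_k a k ^+ 2) * (\sum_k b k ^+ 2).
  by rewrite mulr_suml; apply: eq_bigr => k _; rewrite mulr_sumr.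
have E2 : \sum_k \sum_l (a l ^+ 2 * b k ^+ 2) = (\sum_k a k ^+ 2) * (\sum_k b k ^+ 2).
  by rewrite exchange_big /= E1.
have E3 : \sum_k \sum_l ((a k * b k) * (a l * b l)) = (\sum_k a k * b k) ^+ 2.
  by rewrite expr2 mulr_suml; apply: eq_bigr => k _; rewrite mulr_sumr.
rewrite E E1 E2 E3 in H; lra.
Qed.

Lemma enorm_ge0 u : 0 <= enorm u.
Proof. exact: sqrtr_ge0. Qed.

Lemma enorm_sq u : enorm u ^+ 2 = \sum_k (u 0 k) ^+ 2.
Proof. by rewrite sqr_sqrtr // sumr_ge0 // => k _; exact: sqr_ge0. Qed.

Lemma enormD u w : enorm (u + w) <= enorm u + enorm w.
Proof.
have h1 := enorm_ge0 u; have h2 := enorm_ge0 w.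
rewrite -(ler_pXn2r (n:=2)) ?nnegrE ?enorm_ge0 ?addr_ge0 //.
rewrite enorm_sq.
have -> : \sum_k ((u + w) 0 k) ^+ 2 =
   \sum_k (u 0 k) ^+ 2 + \sum_k (w 0 k) ^+ 2 + 2 * \sum_k (u 0 k * w 0 k).
  rewrite mulr_sumr -!big_split /=; apply: eq_bigr => k _; rewrite mxE; ring.
have cs := cs_sum (fun k => u 0 k) (fun k => w 0 k).
rewrite -!enorm_sq in cs.
have : \sum_k u 0 k * w 0 k <= enorm u * enorm w.
  apply: ler_normlW.
  rewrite -(ler_pXn2r (n:=2)) ?nnegrE ?normr_ge0 ?mulr_ge0 //.
  by rewrite real_normK ?num_real // exprMn.
rewrite -!enorm_sq => hh; rewrite sqrrD mulr2n; lra.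
Qed.

Lemma enormZ (c : R) u : enorm (c *: u) = `|c| * enorm u.
Proof.
rewrite /enorm -sqrtr_sqr -sqrtrM ?sqr_ge0 // mulr_sumr.
by congr Num.sqrt; apply: eq_bigr => k _; rewrite mxE exprMn.
Qed.

Lemma enormN u : enorm (- u) = enorm u.
Proof. by rewrite -scaleN1r enormZ normrN normr1 mul1r. Qed.

Lemma enorm0 : enorm (0 : 'rV[R]_d) = 0.
Proof. by rewrite -(scale0r 0) enormZ normr0 mul0r. Qed.

Lemma enormB u w : enorm (u - w) <= enorm u + enorm w.
Proof. by rewrite -(enormN w); exact: enormD. Qed.

Lemma enorm_rev u w : `|enorm u - enorm w| <= enorm (u - w).
Proof.
rewrite ler_norml; apply/andP; split.
- have := enormD (w - u) u; rewrite subrK -opprB enormN; lra.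
- have := enormD (u - w) w; rewrite subrK; lra.
Qed.

Lemma enorm_sum (I : finType) (F : I -> 'rV[R]_d) :
  enorm (\sum_i F i) <= \sum_i enorm (F i).
Proof.
apply: (big_ind2 (fun x y => enorm x <= y)).
- by rewrite enorm0.
- move=> x1 y1 x2 y2 h1 h2; apply: le_trans (enormD _ _) _; exact: lerD.
- by [].
Qed.

End Norm.




Section Phi.
Variable R : realType.
Variables (N d : nat) (a : R -> R) (c1 c2 La : R).
Hypothesis N1 : (1 <= N)%N.
Hypothesis c1p : 0 < c1.
Hypothesis c12 : c1 <= c2.
Hypothesis Lap : 0 < La.
Hypothesis abnd : forall r, 0 <= r -> c1 <= a r /\ a r <= c2.
Hypothesis alip : forall r1 r2, 0 <= r1 -> 0 <= r2 -> `|a r1 - a r2| <= La * `|r1 - r2|.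

Variable x : 'I_N -> 'rV[R]_d.

Let A i j := a (enorm (x i - x j)).
Let S i := \sum_(k < N) A i k.

Lemma A_ge i j : c1 <= A i j. Proof. by case: (abnd (enorm_ge0 (x i - x j))). Qed.
Lemma A_le i j : A i j <= c2. Proof. by case: (abnd (enorm_ge0 (x i - x j))). Qed.

Lemma Nr_gt0 : 0 < (N%:R : R). Proof. by rewrite ltr0n. Qed.

Lemma S_ge i : N%:R * c1 <= S i.
Proof.
have -> : N%:R * c1 = \sum_(k < N) c1 by rewrite sumr_const card_ord mulr_natl.
rewrite /S.
by apply: ler_sum => k _; exact: A_ge.
Qed.

Lemma S_gt0 i : 0 < S i.
Proof. apply: lt_le_trans (S_ge i); exact: mulr_gt0 Nr_gt0 c1p. Qed.

Lemma phi_sum i : \sum_j mt_phi a x i j = 1.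
Proof.
rewrite /mt_phi -mulr_suml -/(S i) divff //; exact: lt0r_neq0 (S_gt0 i).
Qed.

Lemma phi_ge0 i j : 0 <= mt_phi a x i j.
Proof.
rewrite /mt_phi divr_ge0 //; first by apply: le_trans (A_ge i j); exact: ltW.
exact: ltW (S_gt0 i).
Qed.

Lemma A_lip i l j : `|A i j - A l j| <= La * enorm (x i - x l).
Proof.
apply: le_trans (alip (enorm_ge0 _) (enorm_ge0 _)) _.
apply: ler_wpM2l; first exact: ltW.
have := enorm_rev (x i - x j) (x l - x j).
by rewrite opprB addrA subrK.
Qed.

Lemma S_lip i l : `|S i - S l| <= N%:R * La * enorm (x i - x l).
Proof.
rewrite /S -sumrB; apply: le_trans (ler_norm_sum _ _ _) _.
have -> : N%:R * La * enorm (x i - x l) = \sum_(k < N) (La * enorm (x i - x l)).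
  by rewrite sumr_const card_ord mulr_natl mulrnAl.
by apply: ler_sum => k _; exact: A_lip.
Qed.

Lemma phi_lip i l j :
  `|mt_phi a x i j - mt_phi a x l j| <= phiLip N c1 c2 La * enorm (x i - x l).
Proof.
rewrite /mt_phi -/(S i) -/(S l).
set p := A i j; set q := A l j; set s := S i; set t := S l.
set del := enorm (x i - x l).
have sp := S_gt0 i; have tp := S_gt0 l.
have sg := S_ge i; have tg := S_ge l.
have np := Nr_gt0.
have dp : 0 <= del by exact: enorm_ge0.
have hpq : `|p - q| <= La * del by exact: A_lip.
have hst : `|t - s| <= N%:R * La * del by rewrite distrC; exact: S_lip.
have q0 : 0 <= q by apply: le_trans (A_ge l j); exact: ltW.
have qc : q <= c2 by exact: A_le.
have -> : p / s - q / t = ((p - q) * t + q * (t - s)) / (s * t).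
  by field; apply/andP; split; exact: lt0r_neq0.
rewrite normrM normfV (gtr0_norm (mulr_gt0 sp tp)) ler_pdivrMr ?mulr_gt0 //.
apply: le_trans (ler_normD _ _) _.
rewrite !normrM (gtr0_norm tp) (ger0_norm q0).
have h1 : `|p - q| * t <= La * del * t by apply: ler_wpM2r => //; exact: ltW.
have h2 : q * `|t - s| <= c2 * (N%:R * La * del).
  apply: ler_pM => //; exact: normr_ge0.
apply: le_trans (lerD h1 h2) _.
rewrite /phiLip.
set n := (N%:R : R).
have -> : La / (n * c1) * (1 + c2 / c1) * del * (s * t) =
          (La * del * t) * (s / (n * c1)) + (c2 * (La * del)) * (s * t / (n * c1 * c1)).
  by field; apply/andP; split; apply: lt0r_neq0.
have e1 : 1 <= s / (n * c1) by rewrite ler_pdivlMr ?mulr_gt0 // mul1r.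
have e2 : n <= s * t / (n * c1 * c1).
  rewrite ler_pdivlMr ?mulr_gt0 //.
  have : (n * c1) * (n * c1) <= s * t.
    apply: ler_pM => //; apply: mulr_ge0; apply: ltW => //.
  move=> h; apply: le_trans h; rewrite le_eqVlt; apply/orP; left; apply/eqP; ring.
have f1 : 0 <= La * del * t.
  apply: mulr_ge0; [apply: mulr_ge0; [exact: ltW| exact: dp] | exact: ltW].
have f2 : 0 <= c2 * (La * del).
  apply: mulr_ge0; [lra|apply: mulr_ge0; [exact: ltW| exact: dp]].
apply: lerD.
  by rewrite -{1}(mulr1 (La * del * t)); apply: ler_wpM2l.
apply: le_trans (ler_wpM2l f2 e2).
by rewrite le_eqVlt; apply/orP; left; apply/eqP; ring.
Qed.

Lemma phi_diff_sum i l : \sum_j `|mt_phi a x i j - mt_phi a x l j|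
   <= N%:R * phiLip N c1 c2 La * enorm (x i - x l).
Proof.
have -> : N%:R * phiLip N c1 c2 La * enorm (x i - x l) = \sum_(k < N) (phiLip N c1 c2 La * enorm (x i - x l)).
  by rewrite sumr_const card_ord mulr_natl mulrnAl.
by apply: ler_sum => j _; exact: phi_lip.
Qed.

End Phi.




Lemma contractV (R : realType) (N d : nat) (c : 'I_N -> R) (v : 'I_N -> 'rV[R]_d) (B : R) :
  \sum_j c j = 0 -> (forall j m, enorm (v j - v m) <= B) ->
  enorm (\sum_j c j *: v j) <= (\sum_j `|c j|) / 2 * B.
Proof.
move=> c0 hB.
pose cp j := (`|c j| + c j) / 2.
pose cm j := (`|c j| - c j) / 2.
have cp0 j : 0 <= cp j.
  rewrite /cp divr_ge0 //; have := ler_norm (- c j); rewrite normrN; lra.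
have cm0 j : 0 <= cm j.
  rewrite /cm divr_ge0 //; have := ler_norm (c j); lra.
set P := \sum_j cp j.
have PE : P = (\sum_j `|c j|) / 2.
  by rewrite /P /cp -mulr_suml big_split /= c0 addr0.
have QE : \sum_j cm j = P.
  by rewrite PE /cm -mulr_suml sumrB c0 subr0.
have key : P *: \sum_j c j *: v j =
   \sum_j \sum_m (cp j * cm m) *: (v j - v m).
  have -> : \sum_j \sum_m (cp j * cm m) *: (v j - v m) =
     \sum_j \sum_m (cp j * cm m) *: v j - \sum_j \sum_m (cp j * cm m) *: v m.
    rewrite -sumrB; apply: eq_bigr => j _; rewrite -sumrB.
    by apply: eq_bigr => m _; rewrite scalerBr.
  have -> : \sum_j \sum_m (cp j * cm m) *: v j = \sum_j (cp j * P) *: v j.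
    apply: eq_bigr => j _; rewrite -scaler_suml -mulr_sumr QE //.
  have -> : \sum_j \sum_m (cp j * cm m) *: v m = \sum_m (P * cm m) *: v m.
    rewrite exchange_big /=; apply: eq_bigr => m _.
    by rewrite -scaler_suml -mulr_suml.
  rewrite -sumrB scaler_sumr; apply: eq_bigr => k _.
  by rewrite scalerA -scalerBl; congr (_ *: _); rewrite /cp /cm; field.
have P0 : 0 <= P by apply: sumr_ge0 => j _.
have bnd : enorm (P *: \sum_j c j *: v j) <= P * P * B.
  rewrite key; apply: le_trans (enorm_sum _) _.
  have -> : P * P * B = \sum_j \sum_m (cp j * cm m) * B.
    rewrite -mulrA {1}/P mulr_suml; apply: eq_bigr => j _.
    rewrite -QE mulr_suml mulr_sumr; apply: eq_bigr => m _; ring.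
  apply: ler_sum => j _; apply: le_trans (enorm_sum _) _; apply: ler_sum => m _.
  rewrite enormZ ger0_norm; last exact: mulr_ge0.
  apply: ler_wpM2l; [exact: mulr_ge0|exact: hB].
rewrite -PE.
case: (ltrP 0 P) => Pp.
  rewrite enormZ ger0_norm // -mulrA in bnd.
  by rewrite -(ler_pM2l Pp).
have P00 : P = 0 by apply/eqP; rewrite eq_le Pp P0.
have call : forall j, c j = 0.
  have : \sum_j `|c j| = 0.
    have -> : \sum_j `|c j| = 2 * ((\sum_j `|c j|) / 2) by field.
    by rewrite -PE P00 mulr0.
  move/eqP; rewrite psumr_eq0 // => /allP H j.
  by apply/eqP; rewrite -normr_eq0; apply: H; exact: mem_index_enum.
rewrite P00 mul0r.
have -> : \sum_j c j *: v j = 0 by apply: big1 => j _; rewrite call scale0r.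
by rewrite enorm0.
Qed.




Lemma v_update (R : realType) (N d : nat) (a : R -> R) (c1 c2 : R)
   (x : 'I_N -> 'rV[R]_d) (v v' : 'I_N -> 'rV[R]_d) (k : R) :
  (1 <= N)%N -> 0 < c1 -> c1 <= c2 ->
  (forall r, 0 <= r -> c1 <= a r /\ a r <= c2) ->
  (forall i, v' i = v i + k *: \sum_j mt_phi a x i j *: (v j - v i)) ->
  forall i l, v' i - v' l = (1 - k) *: (v i - v l) +
       k *: \sum_j (mt_phi a x i j - mt_phi a x l j) *: v j.
Proof.
move=> N1 c1p c12 abnd hv i l.
have E m : \sum_j mt_phi a x m j *: (v j - v m) = \sum_j mt_phi a x m j *: v j - v m.
  under eq_bigr do rewrite scalerBr.
  by rewrite sumrB -scaler_suml (phi_sum N1 c1p abnd) scale1r.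
rewrite !hv !E.
have -> : \sum_j (mt_phi a x i j - mt_phi a x l j) *: v j =
   \sum_j mt_phi a x i j *: v j - \sum_j mt_phi a x l j *: v j.
  by rewrite -sumrB; apply: eq_bigr => j _; rewrite scalerBl.
move: (\sum_j _ *: v j) (\sum_j _ *: v j) => Si Sl.
by apply/rowP => t; rewrite !mxE; ring.
Qed.

Lemma phiLip_ge0 (R : realType) N (c1 c2 La : R) :
  0 < c1 -> c1 <= c2 -> 0 < La -> 0 <= phiLip N c1 c2 La.
Proof.
move=> c1p c12 Lap; rewrite /phiLip; apply: mulr_ge0.
  by apply: divr_ge0; [exact: ltW | apply: mulr_ge0 => //; exact: ltW].
apply: addr_ge0 => //; apply: divr_ge0; [lra|exact: ltW].
Qed.

Lemma flock (R : realType) (N d : nat) (kappa h : R) (a : R -> R) (c1 c2 La : R)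
   (x v : nat -> 'I_N -> 'rV[R]_d) (B0 r : R) :
  (1 <= N)%N -> 0 < c1 -> c1 <= c2 -> 0 < La ->
  (forall r, 0 <= r -> c1 <= a r /\ a r <= c2) ->
  (forall r1 r2, 0 <= r1 -> 0 <= r2 -> `|a r1 - a r2| <= La * `|r1 - r2|) ->
  0 < kappa -> 0 < h -> h * kappa <= 1 ->
  is_MT_solution kappa h a x v -> 0 <= B0 -> 0 <= r ->
  (forall i j, enorm (v 0%N i - v 0%N j) <= B0) ->
  (forall i j, enorm (x 0%N i - x 0%N j) <= r) ->
  N%:R * phiLip N c1 c2 La * (r + 6 / (5 * kappa) * B0) <= 1 / 3 ->
  forall n, (forall i j, enorm (v n i - v n j) <= (1 - 5 / 6 * (h * kappa)) ^+ n * B0) /\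
            (forall i j, enorm (x n i - x n j) <=
               r + 6 / (5 * kappa) * (1 - (1 - 5 / 6 * (h * kappa)) ^+ n) * B0).
Proof.
move=> N1 c1p c12 Lap abnd alip kp hp hk sol B00 r0 hv0 hx0 small.
set q := 1 - 5 / 6 * (h * kappa).
have q0 : 0 <= q by rewrite /q; lra.
have q1 : q <= 1 by rewrite /q; have := mulr_gt0 hp kp; lra.
have kp0 : 0 < h * kappa by exact: mulr_gt0.
have Lp := phiLip_ge0 N c1p c12 Lap.
have np : 0 < (N%:R : R) by rewrite ltr0n.
have c6 : 0 < 6 / (5 * kappa) by apply: divr_gt0 => //; apply: mulr_gt0.
elim=> [|n [IHv IHx]].
  split=> i j; first by rewrite expr0 mul1r.
  by rewrite expr0 subrr mulr0 mul0r addr0.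
have qn0 : 0 <= q ^+ n by exact: exprn_ge0.
have qn1 : q ^+ n <= 1 by exact: exprn_ile1.
split=> i l.
- have upd := @v_update R N d a c1 c2 (x n) (v n) (v n.+1) (h * kappa) N1 c1p c12 abnd
     (fun i => proj2 (sol n i)) i l.
  rewrite upd.
  apply: le_trans (enormD _ _) _.
  rewrite !enormZ (ger0_norm (ltW kp0)) ger0_norm; last lra.
  set c := fun j => mt_phi a (x n) i j - mt_phi a (x n) l j.
  have csum : \sum_j c j = 0.
    by rewrite /c sumrB !(phi_sum N1 c1p abnd) subrr.
  have hc := contractV csum IHv.
  have hs := phi_diff_sum N1 c1p Lap abnd alip (x n) i l.
  have hx := IHx i l.
  set S := \sum_j `|c j|.
  have S0 : 0 <= S by apply: sumr_ge0 => j _.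
  have S13 : S <= 1 / 3.
    apply: le_trans hs _; apply: le_trans small.
    apply: ler_wpM2l; first exact: mulr_ge0 (ltW np) Lp.
    apply: le_trans hx _; rewrite lerD2l -mulrA ler_wpM2l //; first exact: ltW.
    rewrite -{2}(mul1r B0); apply: ler_wpM2r => //; lra.
  have e1 : enorm (v n i - v n l) <= q ^+ n * B0 := IHv i l.
  rewrite exprS.
  set Q := q ^+ n * B0.
  have Q0 : 0 <= Q by exact: mulr_ge0.
  have e2 : enorm (\sum_j c j *: v n j) <= S / 2 * Q := hc.
  have : (1 - h * kappa) * enorm (v n i - v n l) <= (1 - h * kappa) * Q.
    by apply: ler_wpM2l => //; lra.
  have : h * kappa * enorm (\sum_j c j *: v n j) <= h * kappa * (S / 2 * Q).
    by apply: ler_wpM2l => //; exact: ltW.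
  have : h * kappa * (S / 2 * Q) <= h * kappa * (1 / 6 * Q).
    apply: ler_wpM2l; first exact: ltW.
    apply: ler_wpM2r => //; lra.
  have -> : q * q ^+ n * B0 = (1 - h * kappa) * Q + h * kappa * (1 / 6 * Q) by rewrite /Q /q; field.
  move=> ha hb hc2; lra.
- have hx := IHx i l.
  have hv := IHv i l.
  have -> : x n.+1 i - x n.+1 l = (x n i - x n l) + h *: (v n i - v n l).
    rewrite (proj1 (sol n i)) (proj1 (sol n l)).
    by apply/rowP => t; rewrite !mxE; ring.
  apply: le_trans (enormD _ _) _.
  rewrite enormZ (ger0_norm (ltW hp)).
  have : h * enorm (v n i - v n l) <= h * (q ^+ n * B0) by apply: ler_wpM2l => //; exact: ltW.
  have -> : r + 6 / (5 * kappa) * (1 - q ^+ n.+1) * B0 =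
            r + 6 / (5 * kappa) * (1 - q ^+ n) * B0 + h * (q ^+ n * B0).
    rewrite exprS /q; field; exact: lt0r_neq0.
  lra.
Qed.



Lemma frobDiff_bound (R : realType) (N d : nat) (y z : 'I_N -> 'rV[R]_d) (P Q : R) :
  0 <= P -> 0 <= Q -> (forall i j, enorm (y i - y j) <= P) ->
  (forall i j, enorm (z i - z j) <= Q) -> frobDeltaDiff y z <= N%:R * (P + Q).
Proof.
move=> P0 Q0 hy hz.
have PQ : 0 <= P + Q by exact: addr_ge0.
have -> : N%:R * (P + Q) = Num.sqrt (\sum_(i < N) \sum_(j < N) (P + Q) ^+ 2).
  rewrite !sumr_const !card_ord -mulrnA.
  have -> : (P + Q) ^+ 2 *+ (N * N) = (N%:R * (P + Q)) ^+ 2 by rewrite -mulr_natl natrM; ring.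
  rewrite sqrtr_sqr ger0_norm //; apply: mulr_ge0 => //; exact: ler0n.
rewrite /frobDeltaDiff ler_sqrt; last first.
  by apply: sumr_ge0 => i _; apply: sumr_ge0 => j _; exact: sqr_ge0.
apply: ler_sum => i _; apply: ler_sum => j _.
rewrite ler_sqr ?nnegrE //; last exact: enorm_ge0.
apply: le_trans (enormB _ _) _.
by apply: lerD.
Qed.

Lemma pow_exp_bound (R : realType) (c b : R) (n : nat) :
  0 <= b -> b <= c -> c <= 1 -> (1 - c) ^+ n <= expR (- b * n%:R).
Proof.
move=> b0 bc c1.
have hq : 1 - c <= expR (- c) by have := expR_ge1Dx (- c); lra.
apply: (@le_trans _ _ (expR (- c) ^+ n)).
  apply: lerXn2r => //; rewrite nnegrE; [lra | exact: ltW (expR_gt0 _)].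
rewrite -expRM_natr ler_expR; apply: ler_wpM2r; first exact: ler0n.
lra.
Qed.

Lemma coef_bound (R : realType) (X eps E den : R) :
  0 <= X -> 0 < eps -> eps < 1 -> 1 <= E -> 0 < den -> den <= eps ->
  X <= Num.sqrt (X ^+ 2 * eps) * E / den.
Proof.
move=> X0 e0 e1 E1 d0 de.
rewrite ler_pdivlMr // sqrtrM ?sqr_ge0 // sqrtr_sqr ger0_norm //.
have se : eps <= Num.sqrt eps.
  have s1 : Num.sqrt eps <= 1 by rewrite -sqrtr1 ler_sqrt //; lra.
  have s0 := sqrtr_ge0 eps.
  have : Num.sqrt eps ^+ 2 = eps by rewrite sqr_sqrtr //; exact: ltW.
  nra.
have : den <= Num.sqrt eps * E.
  have s0 := sqrtr_ge0 eps.
  have : Num.sqrt eps * 1 <= Num.sqrt eps * E by apply: ler_wpM2l.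
  lra.
move=> hd; rewrite -mulrA; exact: ler_wpM2l.
Qed.

End Helpers.
Import Helpers.

Lemma psi_int_le (R : realType) N (c1 c2 La r M : R) :
  0 <= r -> r <= M -> 0 <= phiLip N c1 c2 La ->
  psi_int N c1 c2 La r M <= M - r.
Proof.
move=> r0 rM k0.
have cont : continuous (psi N c1 c2 La).
  move=> x; rewrite /psi.
  apply: cvgB; first exact: cvg_cst.
  by apply: cvgMr; exact: cvg_id.
rewrite /psi_int.
have -> : M - r = \int[lebesgue_measure]_(s in `[r, M]) (cst 1 s : R).
  rewrite Rintegral_cst; last exact: measurable_itv.
  rewrite mul1r; have := lebesgue_measure_itv `[r, M]; rewrite /= => ->.
  case: (ltrP r M) => [rM'|Mr]; first by rewrite lte_fin rM' /=.
  have -> : r = M by apply/eqP; rewrite eq_le rM Mr.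
  by rewrite ltxx subrr.
apply: le_Rintegral.
- exact: measurable_itv.
- apply: continuous_compact_integrable; first exact: segment_compact.
  by move=> x; apply: continuous_subspaceT.
- apply: continuous_compact_integrable; first exact: segment_compact.
  by apply: continuous_subspaceT => x; exact: cvg_cst.
- move=> x; rewrite /= in_itv /= => /andP[rx xM].
  rewrite /psi /= lerBlDr lerDl; apply: mulr_ge0; [exact: mulr_ge0 | lra].
Qed.

Lemma frob_ge0 (R : realType) (N d : nat) (y : 'I_N -> 'rV[R]_d) : 0 <= frobDelta y.
Proof. exact: sqrtr_ge0. Qed.

Lemma enorm_le_frob (R : realType) (N d : nat) (y : 'I_N -> 'rV[R]_d) i j :
  enorm (y i - y j) <= frobDelta y.
Proof.
rewrite /frobDelta -(ger0_norm (enorm_ge0 (y i - y j))) -sqrtr_sqr ler_sqrt; last first.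
  by apply: sumr_ge0 => ? _; apply: sumr_ge0 => ? _; exact: sqr_ge0.
apply: (@le_trans _ _ (\sum_(j0 < N) enorm (y i - y j0) ^+ 2)).
  by rewrite (bigD1 j) //= lerDl; apply: sumr_ge0 => ? _; exact: sqr_ge0.
rewrite [X in _ <= X](bigD1 i) //= lerDl; apply: sumr_ge0 => ? _; apply: sumr_ge0 => ? _; exact: sqr_ge0.
Qed.

Theorem corollary4p7 (R : realType) (N d : nat) (kappa : R) (a : R -> R)
    (c1 c2 La : R) (X0 V0 Xb0 Vb0 : 'I_N -> 'rV[R]_d) (C : R) :
  (1 <= N)%N -> (1 <= d)%N -> 0 < kappa ->
  0 < c1 -> c1 <= c2 -> 0 < La ->
  (forall r, 0 <= r -> c1 <= a r /\ a r <= c2) ->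
  (forall r1 r2, 0 <= r1 -> 0 <= r2 -> `|a r1 - a r2| <= La * `|r1 - r2|) ->
  Num.max (frobDelta X0) (frobDelta Xb0) < Mconst N c1 c2 La ->
  frobDelta V0 < kappa * psi_int N c1 c2 La (frobDelta X0) (Mconst N c1 c2 La) ->
  frobDelta Vb0 < kappa * psi_int N c1 c2 La (frobDelta Xb0) (Mconst N c1 c2 La) ->
  0 < C < 1 ->
  exists cb0 cb1 cb2 : R, [/\ 0 <= cb0, 0 <= cb1, 0 <= cb2 &
    forall eps : R, 0 < eps < 1 ->
    exists h0 : R, 0 < h0 /\
    forall h : R, 0 < h -> h < h0 -> h < 1 -> h < 1 / kappa ->
    forall x v xb vb : nat -> 'I_N -> 'rV[R]_d,
      x 0%N = X0 -> v 0%N = V0 -> xb 0%N = Xb0 -> vb 0%N = Vb0 ->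
      is_MT_solution kappa h a x v -> is_MT_solution kappa h a xb vb ->
      let b1 := Num.sqrt (cb0 * eps + cb1 * h + cb2 * h ^+ 2) in
      let b2 := C * kappa * psi N c1 c2 La (Mconst N c1 c2 La) * h in
      forall n : nat,
        frobDeltaDiff (v n) (vb n) <=
          (1 - eps) ^+ n * frobDeltaDiff V0 Vb0
          + b1 * expR b2 / (1 - (1 - eps) * expR b2) * expR (- b2 * n%:R)].
Proof.
move=> N1 d1 kp c1p c12 Lap abnd alip hmax hV hVb /andP[C0 C1].
have Lp : 0 < phiLip N c1 c2 La.
  rewrite /phiLip; apply: mulr_gt0.
    by apply: divr_gt0 => //; apply: mulr_gt0 => //; rewrite ltr0n.
  apply: addr_gt0; first exact: ltr01.
  by apply: divr_gt0 => //; exact: lt_le_trans c12.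
have rX0 : 0 <= frobDelta X0 by exact: frob_ge0.
have rXb0 : 0 <= frobDelta Xb0 by exact: frob_ge0.
have rXM : frobDelta X0 < Mconst N c1 c2 La.
  by apply: le_lt_trans hmax; rewrite le_max lexx.
have rXbM : frobDelta Xb0 < Mconst N c1 c2 La.
  by apply: le_lt_trans hmax; rewrite le_max lexx orbT.
have hB0 : frobDelta V0 < kappa * (Mconst N c1 c2 La - frobDelta X0).
  apply: lt_le_trans hV _; apply: ler_wpM2l; first exact: ltW.
  by apply: psi_int_le => //; [exact: ltW | exact: ltW].
have hBb0 : frobDelta Vb0 < kappa * (Mconst N c1 c2 La - frobDelta Xb0).
  apply: lt_le_trans hVb _; apply: ler_wpM2l; first exact: ltW.
  by apply: psi_int_le => //; [exact: ltW | exact: ltW].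
clear hV hVb hmax.
set M := Mconst N c1 c2 La.
set L := phiLip N c1 c2 La.
have np : 0 < (N%:R : R) by rewrite ltr0n.
have ML : N%:R * L * M = 1 / 4.
  rewrite /M /Mconst -/L; field; apply/andP; split; exact: lt0r_neq0.
have psiM : psi N c1 c2 La M = 3 / 4.
  rewrite /psi -/L; have : L * N%:R * M = 1 / 4 by rewrite (mulrC L). lra.
have Mp : 0 < M.
  have : 0 < N%:R * L * M by rewrite ML.
  by rewrite pmulr_rgt0 // mulr_gt0.
set rX := frobDelta X0; set rXb := frobDelta Xb0.
set B0 := frobDelta V0; set Bb0 := frobDelta Vb0.
have B00 : 0 <= B0 by exact: frob_ge0.
have Bb00 : 0 <= Bb0 by exact: frob_ge0.
have small_gen : forall r B, 0 <= r -> r < M -> B < kappa * (M - r) ->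
    N%:R * L * (r + 6 / (5 * kappa) * B) <= 1 / 3.
  move=> r B r0 rM hB.
  have : 6 / (5 * kappa) * B <= 6 / 5 * (M - r).
    rewrite -ler_pdivlMl; last by apply: divr_gt0 => //; exact: mulr_gt0.
    have -> : (6 / (5 * kappa))^-1 * (6 / 5 * (M - r)) = kappa * (M - r).
      by field; exact: lt0r_neq0.
    exact: ltW.
  move=> h1.
  have h2 : r + 6 / (5 * kappa) * B <= 6 / 5 * M by lra.
  have NL : 0 <= N%:R * L by apply: mulr_ge0; exact: ltW.
  apply: le_trans (ler_wpM2l NL h2) _.
  have -> : N%:R * L * (6 / 5 * M) = 6 / 5 * (N%:R * L * M) by ring.
  rewrite ML; lra.
pose K := B0 + Bb0.
have K0 : 0 <= K by rewrite /K addr_ge0.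
exists ((N%:R * K) ^+ 2), 0, 0; split; [exact: sqr_ge0 | exact: lexx | exact: lexx | ].
move=> eps /andP[e0 e1].
have le0 : ln (1 - eps) < 0 by rewrite ln_lt0 //; apply/andP; split; lra.
pose h0 := - ln (1 - eps) / (C * kappa * (3 / 4)).
have ck : 0 < C * kappa * (3 / 4) by apply: mulr_gt0 => //; exact: mulr_gt0.
exists h0; split; first by apply: divr_gt0 => //; lra.
move=> h hp hh0 h1 hk x v xb vb ex ev exb evb solv solvb b1 b2 n.
have hk1 : h * kappa <= 1.
  by move: hk; rewrite ltr_pdivlMr // => /ltW.
have b2E : b2 = C * kappa * (3 / 4) * h by rewrite /b2 -/M psiM.
have b20 : 0 <= b2 by rewrite b2E; apply: mulr_ge0; [exact: ltW | exact: ltW].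
have b2lt : b2 < - ln (1 - eps).
  by rewrite b2E -ltr_pdivlMl // mulrC.
have eb2 : (1 - eps) * expR b2 < 1.
  have : expR b2 < expR (- ln (1 - eps)) by rewrite ltr_expR.
  rewrite expRN lnK; last by rewrite posrE; lra.
  by move=> h3; rewrite -ltr_pdivlMl ?subr_gt0 // mulr1.
have eb1 : 1 <= expR b2 by have := expR_ge1Dx b2; lra.
pose den := 1 - (1 - eps) * expR b2.
have den0 : 0 < den by rewrite /den subr_gt0.
have deneps : den <= eps.
  have : (1 - eps) * 1 <= (1 - eps) * expR b2 by apply: ler_wpM2l => //; lra.
  rewrite /den mulr1; lra.
pose q := 1 - 5 / 6 * (h * kappa).
have [Fv _] := flock N1 c1p c12 Lap abnd alip kp hp hk1 solv B00 rX0
   (fun i j => ltac:(rewrite ev; exact: enorm_le_frob))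
   (fun i j => ltac:(rewrite ex; exact: enorm_le_frob))
   (small_gen _ _ rX0 rXM hB0) n.
have [Fvb _] := flock N1 c1p c12 Lap abnd alip kp hp hk1 solvb Bb00 rXb0
   (fun i j => ltac:(rewrite evb; exact: enorm_le_frob))
   (fun i j => ltac:(rewrite exb; exact: enorm_le_frob))
   (small_gen _ _ rXb0 rXbM hBb0) n.
have hk0 : 0 < h * kappa by exact: mulr_gt0.
have qn0 : 0 <= q ^+ n by apply: exprn_ge0; rewrite /q; lra.
have lhs : frobDeltaDiff (v n) (vb n) <= N%:R * (q ^+ n * B0 + q ^+ n * Bb0).
  by apply: frobDiff_bound => //; apply: mulr_ge0.
have qexp : q ^+ n <= expR (- b2 * n%:R).
  apply: pow_exp_bound => //.
  rewrite b2E.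
  have hc : C * (3 / 4) <= 5 / 6 by lra.
  have -> : C * kappa * (3 / 4) * h = (C * (3 / 4)) * (h * kappa) by ring.
  by apply: ler_wpM2r => //; exact: ltW.
  lra.
have A : N%:R * K <= b1 * expR b2 / den.
  rewrite /b1 !mul0r !addr0.
  apply: coef_bound => //.
  by apply: mulr_ge0 => //; exact: ltW.
have fst : 0 <= (1 - eps) ^+ n * frobDeltaDiff V0 Vb0.
  by apply: mulr_ge0; [apply: exprn_ge0; lra | exact: sqrtr_ge0].
have e2 : N%:R * (q ^+ n * B0 + q ^+ n * Bb0) = N%:R * K * q ^+ n by rewrite /K; ring.
rewrite e2 in lhs.
apply: le_trans lhs _.
apply: le_trans (_ : _ <= b1 * expR b2 / den * expR (- b2 * n%:R)) _; last by rewrite lerDr.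
apply: ler_pM => //; apply: mulr_ge0 => //; exact: ltW.
Qed.
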